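(* Let $\mathfrak{A}$ be a commutative Banach algebra, let $\mathfrak{B}$ be a dual Banach algebra, and let $\theta:\mathfrak{A}\to\mathfrak{B}$ be a continuous homomorphism with $w^*$-dense range. If $\mathfrak{A}$ is weakly amenable, then $\mathfrak{B}$ is weakly Connes amenable.
   Context: A dual Banach algebra is a Banach algebra $\mathfrak{B}$ which is the dual of a Banach space $\mathfrak{B}_*$ and whose multiplication is separately $w^*$-continuous. A derivation $D:\mathfrak{C}\to F$ is a continuous linear map with $D(xy)=D(x)\cdot y+x\cdot D(y)$; inner if $D(x)=x\cdot f-f\cdot x$ for some $f\in F$. A Banach algebra $\mathfrak{A}$ is weakly amenable if every derivation $\mathfrak{A}\to\mathfrak{A}^*$ is inner. For a Banach $\mathfrak{B}$-bimodule $E$, $\sigma wc(E)$ is the set of $x\in E$ such that $b\mapsto b\cdot x$, $b\mapsto x\cdot b$ are continuous from $(\mathfrak{B},w^* )$ to $(E,\sigma(E,E^* ))$; $j_{\mathfrak{B}}:\mathfrak{B}^*\to\sigma wc(\mathfrak{B})^*$ is the adjoint of the inclusion $\sigma wc(\mathfrak{B})\hookrightarrow\mathfrak{B}$. $\mathfrak{B}$ is weakly Connes amenable if for every derivation $D:\mathfrak{B}\to\mathfrak{B}^*$ such that $j_{\mathfrak{B}}\circ D:\mathfrak{B}\to\sigma wc(\mathfrak{B})^*$ is $w^*$-$w^*$ continuous, $j_{\mathfrak{B}}\circ D$ is inner. *)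

(* Defs.v *)
From mathcomp Require Import all_boot all_algebra.
From mathcomp Require Import all_classical all_reals all_analysis.
From mathcomp Require Export complex.
Import GRing.Theory Num.Theory numFieldNormedType.Exports.
Set Implicit Arguments. Unset Strict Implicit. Unset Printing Implicit Defensive.
Local Open Scope ring_scope.
Local Open Scope classical_set_scope.

Definition is_linear_fun (K : numFieldType) (V : normedModType K) (f : V -> K) : Prop :=
  forall (c : K) (x y : V), f (c *: x + y) = c * f x + f y.

Definition is_clinear (K : numFieldType) (V : normedModType K) (f : V -> K) : Prop :=
  is_linear_fun f /\ continuous f.

Definition weak_open (K : numFieldType) (T : Type) (F : set (T -> K)) (U : set T) : Prop :=
  forall x, U x -> exists (n : nat) (fs : 'I_n -> T -> K) (e : K),
    0 < e /\ (forall i, F (fs i)) /\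
    (forall y, (forall i, `|fs i y - fs i x| < e) -> U y).

Definition weak_cont (K : numFieldType) (T1 T2 : Type)
    (F1 : set (T1 -> K)) (F2 : set (T2 -> K)) (g : T1 -> T2) : Prop :=
  forall U, weak_open F2 U -> weak_open F1 (g @^-1` U).

Definition banach_algebra (K : numFieldType) (A : completeNormedModType K)
    (mul : A -> A -> A) : Prop :=
  associative mul /\
  (forall (c : K) (x y z : A), mul (c *: x + y) z = c *: mul x z + mul y z) /\
  (forall (c : K) (x y z : A), mul z (c *: x + y) = c *: mul z x + mul z y) /\
  (forall x y : A, `|mul x y| <= `|x| * `|y|).

(* Elements of A^* are represented as continuous linear functionals A -> K.
   Bimodule structure of A^*:  (a . f)(z) = f (z a),  (f . a)(z) = f (a z).
   A derivation D : A -> A^* is a bounded (= continuous) linear map with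
   D(xy) = D(x).y + x.D(y). *)
Definition derivation_to_dual (K : numFieldType) (A : completeNormedModType K)
    (mul : A -> A -> A) (D : A -> A -> K) : Prop :=
  (forall a, is_clinear (D a)) /\
  (forall (c : K) (a b z : A), D (c *: a + b) z = c * D a z + D b z) /\
  (exists M : K, forall a z : A, `|D a z| <= M * `|a| * `|z|) /\
  (forall x y z : A, D (mul x y) z = D x (mul y z) + D y (mul z x)).

(* weak amenability: every derivation A -> A^* is inner, D(x) = x.f - f.x *)
Definition weakly_amenable (K : numFieldType) (A : completeNormedModType K)
    (mul : A -> A -> A) : Prop :=
  forall D : A -> A -> K, derivation_to_dual mul D ->
    exists f : A -> K, is_clinear f /\
      forall x z : A, D x z = f (mul z x) - f (mul x z).

(* the weak* topology on B = (P)^* given by the duality iota : B -> P -> K *)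
Definition wstar_family (K : numFieldType) (B P : Type) (iota : B -> P -> K)
  : set (B -> K) := fun g => exists p : P, g = (fun b => iota b p).

(* B is a dual Banach algebra with predual P: B is a Banach algebra, and
   iota : B -> P^* is an isometric linear bijection onto the continuous dual
   P^* of the Banach space P; multiplication is separately w*-continuous. *)
Definition dual_banach_algebra (K : numFieldType) (B : completeNormedModType K)
    (mul : B -> B -> B) (P : completeNormedModType K) (iota : B -> P -> K) : Prop :=
  banach_algebra mul /\
  (forall b, is_clinear (iota b)) /\
  (forall (c : K) (a b : B) (p : P), iota (c *: a + b) p = c * iota a p + iota b p) /\
  (forall phi : P -> K, is_clinear phi -> exists b, iota b = phi) /\
  (forall b : B, (forall p, `|iota b p| <= `|b| * `|p|) /\
     (forall e : K, 0 < e -> exists p, `|p| <= 1 /\ `|b| - e < `|iota b p|)) /\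
  (forall a : B, weak_cont (wstar_family iota) (wstar_family iota) (mul a) /\
                 weak_cont (wstar_family iota) (wstar_family iota) (mul^~ a)).

Definition weak_family (K : numFieldType) (B : normedModType K) : set (B -> K) :=
  fun g => is_clinear g.

Definition sigma_wc (K : numFieldType) (B : completeNormedModType K)
    (mul : B -> B -> B) (P : Type) (iota : B -> P -> K) : set B :=
  fun x => weak_cont (wstar_family iota) (@weak_family K B) (mul^~ x) /\
           weak_cont (wstar_family iota) (@weak_family K B) (mul x).

(* Elements of sigma wc(B)^* are represented by functions g : B -> K, only
   their values on S = sigma wc(B) matter; j_B(phi) = phi restricted to S.
   The w* topology of sigma wc(B)^* is induced by the evaluations at x in S. *)
Definition eval_family (K : numFieldType) (B : Type) (S : set B)
  : set ((B -> K) -> K) := fun ev => exists x, S x /\ ev = (fun g : B -> K => g x).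

Definition weakly_Connes_amenable (K : numFieldType) (B : completeNormedModType K)
    (mul : B -> B -> B) (P : Type) (iota : B -> P -> K) : Prop :=
  let S := sigma_wc mul iota in
  forall D : B -> B -> K, derivation_to_dual mul D ->
    (* j_B o D is w*-w*-continuous *)
    weak_cont (wstar_family iota) (@eval_family K B S) D ->
    (* j_B o D is inner: j_B(D b) = b.f - f.b for some f in sigma wc(B)^* *)
    exists f : B -> K,
      (forall (c : K) (x y : B), S x -> S y -> f (c *: x + y) = c * f x + f y) /\
      {within S, continuous f} /\
      forall b x : B, S x -> D b x = f (mul x b) - f (mul b x).

(* Main.v *)
Require Import Defs.
From HB Require Import structures.
From mathcomp Require Import all_boot all_algebra.
From mathcomp Require Import all_classical all_reals all_analysis.
From mathcomp Require Import complex.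
From mathcomp Require Import all_order ring.
Import Order.TTheory GRing.Theory Num.Theory numFieldNormedType.Exports.
Local Open Scope ring_scope.
Local Open Scope classical_set_scope.
Set Implicit Arguments. Unset Strict Implicit.

Lemma wo_ball (K : numFieldType) (T : Type) (F : set (T -> K)) g t r :
  F g -> weak_open F [set y | `|g y - t| < r].
Proof.
move=> Fg x /= hx; exists 1%N, (fun _ => g), (r - `|g x - t|).
split; first by rewrite subr_gt0.
split=> // y /(_ ord0) hy /=.
apply: (le_lt_trans (ler_distD (g x) (g y) t)).
by rewrite -ltrBrDr.
Qed.

Lemma wo_const (K : numFieldType) (T : Type) (F : set (T -> K)) (Q : Prop) :
  weak_open F [set _ : T | Q].
Proof.
move=> x /= hx; exists 0%N, (fun _ _ => 0), 1; split => //; split => //.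
by case.
Qed.

Lemma wo_setI (K : numFieldType) (T : Type) (F : set (T -> K)) U V :
  weak_open F U -> weak_open F V -> weak_open F (U `&` V).
Proof.
move=> hU hV x [Ux Vx].
have [n [fs [e [e0 [Fe He]]]]] := hU x Ux.
have [m [gs [d [d0 [Fd Hd]]]]] := hV x Vx.
have e0' : 0 < e * d / (e + d) by rewrite divr_gt0 ?mulr_gt0 ?addr_gt0.
have le1 : e * d / (e + d) <= e.
  by rewrite ler_pdivrMr ?addr_gt0 // mulrDr lerDr ltW // mulr_gt0.
have le2 : e * d / (e + d) <= d.
  by rewrite ler_pdivrMr ?addr_gt0 // mulrDr mulrC lerDl ltW // mulr_gt0.
exists (n + m)%N, (fun i => match fintype.split i with inl j => fs j | inr k => gs k end),
  (e * d / (e + d)).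
split => //; split.
  by move=> i; case: (fintype.split i).
move=> y hy; split.
  apply: He => j; have := hy (unsplit (inl j)); rewrite unsplitK => h.
  exact: lt_le_trans h le1.
apply: Hd => j; have := hy (unsplit (inr j)); rewrite unsplitK => h.
exact: lt_le_trans h le2.
Qed.

Lemma dense_eq (K : numFieldType) (T A : Type) (F : set (T -> K)) (th : A -> T)
  (dense : forall U, weak_open F U -> (exists b, U b) -> exists a, U (th a))
  (h1 h2 : T -> K) :
  (forall t r, weak_open F [set b | `|h1 b - t| < r]) ->
  (forall t r, weak_open F [set b | `|h2 b - t| < r]) ->
  (forall a, h1 (th a) = h2 (th a)) -> forall x, h1 x = h2 x.
Proof.
move=> hb1 hb2 hth x; apply/eqP/negPn/negP => hne.
have d0 : 0 < `|h1 x - h2 x| by rewrite normr_gt0 subr_eq0.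
set d := `|h1 x - h2 x| in d0.
have hx : ([set b | `|h1 b - h1 x| < d / 2] `&` [set b | `|h2 b - h2 x| < d / 2]) x.
  by rewrite /= !subrr normr0; split; rewrite divr_gt0.
have [a [ha1 ha2]] := dense _ (wo_setI (hb1 (h1 x) (d / 2)) (hb2 (h2 x) (d / 2)))
  (ex_intro _ x hx).
move: ha1 ha2; rewrite /= hth => ha1 ha2.
have : d < d.
  rewrite {2}(splitr d); apply: le_lt_trans (ler_distD (h2 (th a)) _ _) _.
  by rewrite ltrD // distrC.
by rewrite ltxx.
Qed.

Lemma lin_bound (K : numFieldType) (V W : normedModType K) (f : V -> W) :
  (forall c x y, f (c *: x + y) = c *: f x + f y) -> continuous f ->
  exists2 C, 0 < C & forall x, `|f x| <= C * `|x|.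
Proof.
move=> lf cf.
pose fL : {linear V -> W} := HB.pack f (GRing.isLinear.Build _ _ _ _ _ lf).
have := @continuous_linear_bounded _ _ _ 0 fL (cf 0).
by move/linear_boundedP => /pinfty_ex_gt0 [C C0 hC]; exists C.
Qed.

Lemma lin_cont (K : numFieldType) (V W : normedModType K) (f : V -> W) (C : K) :
  (forall c x y, f (c *: x + y) = c *: f x + f y) -> 0 <= C ->
  (forall x, `|f x| <= C * `|x|) -> continuous f.
Proof.
move=> lf C0 hC.
pose fL : {linear V -> W} := HB.pack f (GRing.isLinear.Build _ _ _ _ _ lf).
apply: (@bounded_linear_continuous _ _ _ fL); apply/linear_boundedP.
near=> r => x; apply: le_trans (hC x) _; apply: ler_wpM2r => //.
near: r; apply: nbhs_pinfty_ge; by rewrite ger0_real.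
Unshelve. all: by end_near.
Qed.

Lemma lin_contK (K : numFieldType) (V : normedModType K) (f : V -> K) (C : K) :
  (forall c x y, f (c *: x + y) = c * f x + f y) -> 0 <= C ->
  (forall x, `|f x| <= C * `|x|) -> continuous f.
Proof. by move=> lf; apply: lin_cont. Qed.

Lemma bound_abs (K : numFieldType) (M u v : K) :
  0 <= u -> 0 <= v -> v <= M * u -> v <= `|M| * u.
Proof.
move=> u0 v0 h; have [u00|uneq] := eqVneq u 0.
  by move: h; rewrite u00 !mulr0.
have up : 0 < u by rewrite lt_def uneq u0.
have : 0 <= M * u by apply: le_trans h.
by rewrite pmulr_lge0 // => M0; rewrite ger0_norm.
Qed.

Lemma ccomp (T U V : topologicalType) (f : T -> U) (g : U -> V) :
  continuous f -> continuous g -> continuous (fun x => g (f x)).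
Proof. by move=> cf cg x; exact: (continuous_comp (cf x) (cg (f x))). Qed.

Theorem proposition3p16 (R : realType)
    (A : completeNormedModType R[i]) (mulA : A -> A -> A)
    (B : completeNormedModType R[i]) (mulB : B -> B -> B)
    (P : completeNormedModType R[i]) (iota : B -> P -> R[i])
    (theta : A -> B) :
  banach_algebra mulA ->
  commutative mulA ->
  dual_banach_algebra mulB iota ->
  (forall (c : R[i]) (x y : A), theta (c *: x + y) = c *: theta x + theta y) ->
  (forall x y : A, theta (mulA x y) = mulB (theta x) (theta y)) ->
  continuous theta ->
  (* w*-dense range: every nonempty w*-open set meets the range of theta *)
  (forall U : set B, weak_open (wstar_family iota) U ->
     (exists b, U b) -> exists a, U (theta a)) ->
  weakly_amenable mulA ->
  weakly_Connes_amenable mulB iota.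
Proof.
move=> [assocA [linlA [linrA nmA]]] commA
  [[assocB [linlB [linrB nmB]]] [iotacl [iotalin [iotasurj [iotanorm wcB]]]]]
  thlin thmul thcont dense wa.
rewrite /weakly_Connes_amenable => D [Dcl [Dlin [[M DM] Dder]]] Dwc.
have [C C0 hC] := lin_bound thlin thcont.
have DM' : forall a z, `|D a z| <= `|M| * `|a| * `|z|.
  move=> a z; rewrite -!mulrA; apply: bound_abs; rewrite ?mulr_ge0 //.
  by rewrite mulrA.
have iota_inj : forall b b', (forall p, iota b p = iota b' p) -> b = b'.
  move=> b b' hp; have hd : forall p, iota (b - b') p = 0.
    move=> p; have -> : b - b' = (-1) *: b' + b by rewrite scaleN1r addrC.
    by rewrite iotalin hp mulN1r addNr.
  apply/eqP; rewrite -subr_eq0 -normr_eq0; case: eqVneq => // hne.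
  have hpos : 0 < `|b - b'| by rewrite lt_def hne normr_ge0.
  have [_ hn] := iotanorm (b - b').
  have [p [_]] := hn _ hpos.
  by rewrite subrr hd normr0 ltxx.
have comm : forall a y, mulB (theta a) y = mulB y (theta a).
  move=> a y; apply: iota_inj => p.
  apply: (dense_eq dense (h1 := fun y => iota (mulB (theta a) y) p)
                         (h2 := fun y => iota (mulB y (theta a)) p)).
  - move=> t r; have hw := @wo_ball _ _ (wstar_family iota) (fun c => iota c p) t r (ex_intro _ p erefl).
    exact: ((wcB (theta a)).1 _ hw).
  - move=> t r; have hw := @wo_ball _ _ (wstar_family iota) (fun c => iota c p) t r (ex_intro _ p erefl).
    exact: ((wcB (theta a)).2 _ hw).
  - by move=> a'; rewrite -!thmul commA.
have mulcont : forall x, continuous (fun y => mulB y x).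
  move=> x; apply: (@lin_cont _ _ _ _ `|x| (fun c u v => linlB c u v x)) => // c.
  by rewrite mulrC.
have Dxcont : forall x, continuous (fun u => D u x).
  move=> x; apply: (@lin_contK _ _ _ (`|M| * `|x|)); rewrite ?mulr_ge0 //.
  move=> u; rewrite mulrAC; exact: DM'.
have D1 : forall x a c, D (theta a) (mulB (theta c) x) = 0.
  move=> x.
  have [|f [_ hf]] := wa (fun a c => D (theta a) (mulB (theta c) x)).
    split.
      move=> a; split.
        by move=> k u v /=; rewrite thlin linlB (Dcl (theta a)).1.
      apply: (@ccomp _ _ _ theta (fun y => D (theta a) (mulB y x)) thcont).
      exact: (@ccomp _ _ _ (fun y => mulB y x) (D (theta a)) (mulcont x) (Dcl (theta a)).2).
    split.
      by move=> k a b z /=; rewrite thlin Dlin.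
    split.
      exists (`|M| * C * C * `|x|) => a c.
      apply: le_trans (DM' _ _) _.
      have h2 : `|mulB (theta c) x| <= C * `|c| * `|x|.
        exact: le_trans (nmB _ _) (ler_wpM2r (normr_ge0 _) (hC c)).
      have : `|M| * `|theta a| * `|mulB (theta c) x| <=
             `|M| * (C * `|a|) * (C * `|c| * `|x|).
        by rewrite ler_pM ?mulr_ge0 // ler_wpM2l.
      move/le_trans; apply; rewrite le_eqVlt; apply/orP; left; apply/eqP; ring.
    move=> a b c /=; rewrite thmul Dder !thmul; congr (_ + _).
      by rewrite assocB.
    by rewrite -(comm a) assocB -thmul commA thmul.
  by move=> a c; rewrite hf commA subrr.
have lam0 : forall x a, D (theta a) x = 0.
  move=> x.
  have hAA : forall a b, D (theta (mulA a b)) x = 0.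
    by move=> a b; rewrite thmul Dder D1 -comm D1 addr0.
  pose lam := fun a => D (theta a) x.
  have lamcont : continuous lam.
    exact: (@ccomp _ _ _ theta (fun u => D u x) thcont (Dxcont x)).
  have hl : forall a, `|lam a| <= (`|M| * C * `|x|) * `|a|.
    move=> a; apply: le_trans (DM' _ _) _.
    have : `|M| * `|theta a| * `|x| <= `|M| * (C * `|a|) * `|x|.
      by rewrite ler_wpM2r // ler_wpM2l.
    move/le_trans; apply; rewrite le_eqVlt; apply/orP; left; apply/eqP; ring.
  have [|f [_ hf]] := wa (fun a c => lam a * lam c).
    split.
      move=> a; split.
        by move=> k u v /=; rewrite /lam thlin Dlin mulrDr mulrCA.
      apply: (@ccomp _ _ _ lam (fun y => lam a * y) lamcont).
      apply: (@lin_contK _ _ _ `|lam a|) => //.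
        by move=> k u v; rewrite mulrDr mulrCA.
      by move=> u; rewrite normrM.
    split.
      by move=> k a b z /=; rewrite /lam thlin Dlin mulrDl mulrA.
    split.
      exists ((`|M| * C * `|x|) * (`|M| * C * `|x|)) => a c.
      rewrite normrM.
      have : `|lam a| * `|lam c| <= (`|M| * C * `|x|) * `|a| * ((`|M| * C * `|x|) * `|c|).
        by rewrite ler_pM.
      move/le_trans; apply; rewrite le_eqVlt; apply/orP; left; apply/eqP; ring.
    by move=> a b c /=; rewrite /lam !hAA mul0r !mulr0 addr0.
  move=> a; have := hf a a; rewrite subrr => /eqP; rewrite mulf_eq0 orbb.
  by move/eqP.
exists (fun _ => 0); split.
  by move=> c x y _ _; rewrite mulr0 addr0.
split.
  apply: continuous_subspaceT; exact: cst_continuous.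
move=> b x Sx; rewrite subrr.
apply: (dense_eq dense (h1 := fun b => D b x) (h2 := fun _ => 0)).
- move=> t r.
  have hw := @wo_ball _ _ (eval_family (sigma_wc mulB iota)) (fun g : B -> R[i] => g x) t r
    (ex_intro _ x (conj Sx erefl)).
  exact: (Dwc _ hw).
- move=> t r; exact: wo_const.
- by move=> a; exact: lam0.
Qed.
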